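(* Let $\Omega\subset\mathbb R^2$ be a bounded open set and $A$ a bounded measurable symmetric $2\times2$ matrix-valued function on $\Omega$ with $\det A$ bounded below by a positive constant, and let $\widehat A=A/\det A$. Then $\gamma(A)=\gamma(\widehat A)$, where for such a matrix function $A$, $$\gamma(A)=\left(\sup_{S_\rho(x)\subset\Omega}\ \inf_{\varphi,\psi\in\mathcal B_{x,\rho}}\sqrt{\frac{\sup\varphi}{\inf\psi}}\;\frac{\frac{1}{|S_\rho(x)|}\int_{S_\rho(x)}\sqrt{\frac{\psi}{\varphi}}\,\frac{\langle n,An\rangle}{\sqrt{\det A}}\,d\sigma}{\frac{4}{\pi}\arctan\left(\frac{\inf_{S_\rho(x)}\det A/(\varphi\psi)}{\sup_{S_\rho(x)}\det A/(\varphi\psi)}\right)^{1/4}}\right)^{-1}.$$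
   Context: $S_\rho(x)$ is the circle of radius $\rho$ centered at $x$ (sup over circles contained in $\Omega$), $|S_\rho(x)|=2\pi\rho$, $d\sigma$ arc-length, $n$ the outer unit normal to $S_\rho(x)$, $\mathcal B_{x,\rho}$ the set of positive functions in $L^\infty(S_\rho(x))$ bounded below away from zero, and sup/inf over the circle are essential. *)

(* Defs.v *)
From HB Require Import structures.
From mathcomp Require Import all_boot all_order all_algebra.
From mathcomp Require Import all_classical all_reals all_analysis ess_sup_inf.
Set Implicit Arguments. Unset Strict Implicit. Unset Printing Implicit Defensive.
Import Order.TTheory GRing.Theory Num.Theory.
Import numFieldNormedType.Exports.
Local Open Scope classical_set_scope.
Local Open Scope ring_scope.

Section Gamma.
Variable R : realType.

Definition circ (x : R * R) (rho t : R) : R * R :=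
  (x.1 + rho * cos t, x.2 + rho * sin t).

(* Normalised arc-length on a circle corresponds to (1/2pi) dt on [0,2pi];
   null sets for arc length = Lebesgue-null sets of angles. *)
Definition angles : set R := `[0%R, (2 * pi)%R]%classic.

Definition mu_c := mrestr (@lebesgue_measure R) (measurable_itv `[0%R, (2 * pi)%R]).

Definition Bclass (phi : R -> R) : Prop :=
  measurable_fun angles phi /\
  exists c C : R, 0 < c /\ {ae mu_c, forall t, c <= phi t <= C}.

(* <n, A n> / sqrt(det A) at the point of angle t, n = (cos t, sin t). *)
Definition nAn (A : R * R -> 'M[R]_2) (x : R * R) (rho t : R) : R :=
  let M := A (circ x rho t) in
  (cos t ^+ 2 * M 0 0 + cos t * sin t * (M 0 1 + M 1 0) + sin t ^+ 2 * M 1 1)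
  / Num.sqrt (\det M).

Definition detA_on (A : R * R -> 'M[R]_2) (x : R * R) (rho t : R) : R :=
  \det (A (circ x rho t)).

Definition esup (f : R -> R) : R := fine (ess_sup mu_c (EFin \o f)).
Definition einf (f : R -> R) : R := fine (ess_inf mu_c (EFin \o f)).

Definition Qcirc (A : R * R -> 'M[R]_2) (x : R * R) (rho : R)
    (phi psi : R -> R) : \bar R :=
  let g := fun t => detA_on A x rho t / (phi t * psi t) in
  ((Num.sqrt (esup phi / einf psi) * (2 * pi)^-1
     / (4 / pi * atan ((einf g / esup g) `^ (4^-1)))) %:E
   * (\int[@lebesgue_measure R]_(t in angles)
        (Num.sqrt (psi t / phi t) * nAn A x rho t)%:E))%E.

Definition inner_inf (A : R * R -> 'M[R]_2) (x : R * R) (rho : R) : \bar R :=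
  ereal_inf [set Qcirc A x rho phi psi | phi in Bclass & psi in Bclass].

Definition sup_circ (Omega : set (R * R)) (A : R * R -> 'M[R]_2) : \bar R :=
  ereal_sup [set inner_inf A p.1 p.2 | p in
     [set p : (R * R) * R | 0 < p.2 /\ forall t, Omega (circ p.1 p.2 t)]].

(* gamma(A) = (sup ...)^{-1}, with 1/0 = +oo and 1/(+oo) = 0. *)
Definition gamma (Omega : set (R * R)) (A : R * R -> 'M[R]_2) : \bar R :=
  match sup_circ Omega A with
  | EFin r => if r == 0 then +oo%E else (r^-1)%:E
  | _ => 0%E
  end.

Definition Ahat (A : R * R -> 'M[R]_2) : R * R -> 'M[R]_2 :=
  fun p => (\det (A p))^-1 *: A p.

End Gamma.

(* Main.v *)
Require Import Defs.
From HB Require Import structures.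
From mathcomp Require Import all_boot all_order all_algebra.
From mathcomp Require Import all_classical all_reals all_analysis ess_sup_inf.
From mathcomp Require Import ring lra.
Import Order.TTheory GRing.Theory Num.Theory.
Import numFieldNormedType.Exports.
Local Open Scope classical_set_scope.
Local Open Scope ring_scope.

Section Helpers.
Variable R : realType.

Lemma mu_c_pos : (0 < (@mu_c R) setT)%E.
Proof.
rewrite /mu_c /mrestr setTI lebesgue_measure_itv /=.
have hp : 0 < 2 * pi :> R by rewrite mulr_gt0 // pi_gt0.
by rewrite lte_fin hp oppr0 addr0 lte_fin.
Qed.

Lemma ae_cst (P : Prop) : (\forall t \ae (@mu_c R), P) -> P.
Proof.
move=> H; have PF := ae_properfilter_algebraOfSetsType mu_c_pos.
apply: (@filter_const _ _ PF); exact: H.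
Qed.

Lemma inv_meas : measurable_fun [set: R] (@GRing.inv R).
Proof.
have -> : [set: R] = [set x | x != 0] `|` [set 0].
  by apply/seteqP; split => x //= _; case: (eqVneq x 0) => [->|h]; [right|left].
have m1 : measurable [set x : R | x != 0] := measurable_realfun.open_measurable (@open_neq _ 0).
have m2 : measurable [set (0:R)] := measurable_set1 0.
apply: (proj2 (measurable_funU _ m1 m2)).
split; last exact: measurable_fun_set1.
apply: measurable_realfun.open_continuous_measurable_fun; first exact: open_neq.
by move=> x; rewrite inE /= => hx; apply: inv_continuous.
Qed.

Lemma aeF : Filter (almost_everywhere (@mu_c R)).
Proof. exact: ae_filter_ringOfSetsType. Qed.
Lemma aeS (P Q : R -> Prop) : (forall t, P t -> Q t) ->
  (\forall t \ae (@mu_c R), P t) -> \forall t \ae (@mu_c R), Q t.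
Proof. move=> h; exact: (@filterS _ _ aeF P Q h). Qed.
Lemma aeS2 (P Q S : R -> Prop) : (forall t, P t -> Q t -> S t) ->
  (\forall t \ae (@mu_c R), P t) -> (\forall t \ae (@mu_c R), Q t) ->
  \forall t \ae (@mu_c R), S t.
Proof. move=> h; exact: (@filterS2 _ _ aeF P Q S h). Qed.

Lemma key (f : R -> R) (c : R) : 0 < c ->
  (\forall t \ae (@mu_c R), c <= f t) ->
  esup (fun t => (f t)^-1) = (einf f)^-1.
Proof.
move=> c0 hc.
rewrite /esup /einf.
set s := ess_inf _ _.
have hs := ess_inf_le (@mu_c R) (EFin \o f); rewrite -/s in hs.
have cs : (c%:E <= s)%E.
  by apply/ess_infP; apply: aeS hc => t /= h; rewrite lee_fin.
case Es : s hs cs => [r| |] hs cs; last by [].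
2: exfalso; apply: ae_cst; by apply: aeS hs.
rewrite lee_fin in cs.
have r0 : 0 < r by apply: lt_le_trans cs.
rewrite /=.
suff -> : ess_sup (@mu_c R) (EFin \o (fun t => (f t)^-1)) = (r^-1)%:E by [].
apply/eqP; rewrite eq_le; apply/andP; split.
  apply/ess_supP; apply: aeS hs => t /=; rewrite !lee_fin => h.
  have ft : 0 < f t by apply: lt_le_trans h.
  by rewrite lef_pV2 ?posrE.
have hg := ess_sup_ge (@mu_c R) (EFin \o (fun t => (f t)^-1)).
move: hg; set e := ess_sup _ _ => hg.
case Ee : e hg => [q| |] hg; last 2 first.
- by rewrite leey.
- exfalso; apply: ae_cst; move: hg hc; apply: aeS2 => t /=.
  by rewrite leeNy_eq.
have q0 : 0 < q.
  apply: ae_cst; move: hg hc; apply: aeS2 => t /=; rewrite lee_fin => h1 h2.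
  apply: lt_le_trans h1; rewrite invr_gt0; exact: lt_le_trans h2.
have : (q^-1%:E <= r%:E)%E.
  rewrite -Es; apply/ess_infP; apply: aeS2 hg hc => t /=; rewrite !lee_fin => h1 h2.
  have ft : 0 < f t by apply: lt_le_trans h2.
  by rewrite -(invrK (f t)) lef_pV2 ?posrE ?invr_gt0.
rewrite lee_fin => h; rewrite lee_fin.
by rewrite -(invrK q) lef_pV2 ?posrE ?invr_gt0.
Qed.

Lemma key' (f : R -> R) (c C : R) : 0 < c ->
  (\forall t \ae (@mu_c R), c <= f t <= C) ->
  einf (fun t => (f t)^-1) = (esup f)^-1.
Proof.
move=> c0 hc.
have C0 : 0 < C.
  apply: ae_cst; apply: aeS hc => t /andP[h1 h2].
  by apply: lt_le_trans h2; apply: lt_le_trans h1.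
have C0' : 0 < C^-1 by rewrite invr_gt0.
have h := @key (fun t => (f t)^-1) C^-1 C0'.
have hb : \forall t \ae (@mu_c R), C^-1 <= (f t)^-1.
  apply: aeS hc => t /andP[h1 h2].
  have ft : 0 < f t by apply: lt_le_trans h1.
  by rewrite lef_pV2 ?posrE.
move: (h hb).
have -> : (fun t => (f t)^-1^-1) = f by apply/funext => t; rewrite invrK.
by move=> ->; rewrite invrK.
Qed.

Lemma Bclass_inv (phi : R -> R) : Bclass phi -> Bclass (fun t => (phi t)^-1).
Proof.
move=> [mphi [c [C [c0 hc]]]].
have C0 : 0 < C.
  apply: ae_cst; apply: aeS hc => t /andP[h1 h2].
  by apply: lt_le_trans h2; apply: lt_le_trans h1.
split.
  exact: (measurableT_comp inv_meas mphi).
exists C^-1, c^-1; split; first by rewrite invr_gt0.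
apply: aeS hc => t /andP[h1 h2].
have ft : 0 < phi t by apply: lt_le_trans h1.
by rewrite !lef_pV2 ?posrE // h1 h2.
Qed.

Lemma detAhat (A : R * R -> 'M[R]_2) x rho t :
  detA_on (Ahat A) x rho t = (detA_on A x rho t)^-1.
Proof.
rewrite /detA_on /Ahat detZ.
set d := \det _.
case: (eqVneq d 0) => [->|d0]; first by rewrite invr0 mulr0.
by rewrite expr2 -mulrA mulVf // mulr1.
Qed.

Lemma nAnAhat (A : R * R -> 'M[R]_2) x rho t :
  nAn (Ahat A) x rho t = nAn A x rho t.
Proof.
rewrite /nAn /Ahat !mxE detZ.
set d := \det _.
have -> : d^-1 ^+ 2 * d = d^-1.
  case: (eqVneq d 0) => [->|d0]; first by rewrite invr0 mulr0.
  by rewrite expr2 -mulrA mulVf // mulr1.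
set M := A _.
set N := (cos t ^+ 2 * M 0 0 + _ + _).
have -> : cos t ^+ 2 * (d^-1 * M 0 0) + cos t * sin t * (d^-1 * M 0 1 + d^-1 * M 1 0) +
   sin t ^+ 2 * (d^-1 * M 1 1) = d^-1 * N by rewrite /N; ring.
case: (ltrP 0 d) => hd.
  rewrite sqrtrV ?(ltW hd) // invrK.
  have s0 : Num.sqrt d != 0 by rewrite sqrtr_eq0 -ltNge.
  have dE : d = Num.sqrt d ^+ 2 by rewrite sqr_sqrtr // ltW.
  rewrite [in d^-1]dE; field; exact: s0.
have -> : Num.sqrt d = 0 by apply/eqP; rewrite sqrtr_eq0.
have -> : Num.sqrt d^-1 = 0 by apply/eqP; rewrite sqrtr_eq0 invr_le0.
by rewrite invr0 !mulr0.
Qed.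

Lemma det2 (M : 'M[R]_2) : \det M = M 0 0 * M 1 1 - M 0 1 * M 1 0.
Proof.
rewrite (expand_det_row _ 0) !big_ord_recl big_ord0 /cofactor !det_mx11 /= !mxE /=.
have L : forall (i : 'I_2) (j : 'I_1), lift i j = (if i == 0 then 1 else 0 : 'I_2).
  by move=> i j; apply/val_inj; case: i => [[|[|]]] //= _; case: j => [[|]].
rewrite !L /= !expr0 !mul1r /bump /= expr1.
have -> : (ord0 : 'I_2) = 0 by apply/val_inj.
ring.
Qed.

Lemma Qeq (A : R * R -> 'M[R]_2) x rho c0 D0 phi psi : 0 < c0 ->
  (forall t, c0 <= detA_on A x rho t <= D0) -> Bclass phi -> Bclass psi ->
  Qcirc (Ahat A) x rho phi psi =
  Qcirc A x rho (fun t => (psi t)^-1) (fun t => (phi t)^-1).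
Proof.
move=> c00 hd [_ [c1 [C1 [c10 h1]]]] [_ [c2 [C2 [c20 h2]]]].
have e1 : esup (fun t => (psi t)^-1) = (einf psi)^-1.
  by apply: (@key psi c2 c20); apply: aeS h2 => t /andP[].
have e2 : einf (fun t => (phi t)^-1) = (esup phi)^-1 := @key' phi c1 C1 c10 h1.
set g := fun t => detA_on A x rho t / ((psi t)^-1 * (phi t)^-1).
have gE : forall t, g t = detA_on A x rho t * psi t * phi t.
  by move=> t; rewrite /g invfM !invrK mulrA.
have gb : \forall t \ae (@mu_c R), c0 * c2 * c1 <= g t <= D0 * C2 * C1.
  apply: aeS2 h1 h2 => t /andP[a1 b1] /andP[a2 b2]; rewrite gE.
  have := hd t => /andP[a0 b0].
  have p1 : 0 < phi t by apply: lt_le_trans a1.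
  have p2 : 0 < psi t by apply: lt_le_trans a2.
  have d0 : 0 < detA_on A x rho t by apply: lt_le_trans a0.
  apply/andP; split.
    apply: ler_pM => //; [by rewrite mulr_ge0 // ltW| by rewrite ltW|].
    by apply: ler_pM => //; rewrite ltW.
  apply: ler_pM => //; [by rewrite mulr_ge0 // ltW| by rewrite ltW|].
  by apply: ler_pM => //; rewrite ltW.
have gpos : 0 < c0 * c2 * c1 by rewrite !mulr_gt0.
have eg1 : esup (fun t => (g t)^-1) = (einf g)^-1.
  by apply: (@key g _ gpos); apply: aeS gb => t /andP[].
have eg2 : einf (fun t => (g t)^-1) = (esup g)^-1 := @key' g _ _ gpos gb.
have gAE : (fun t => detA_on (Ahat A) x rho t / (phi t * psi t)) = fun t => (g t)^-1.
  by apply/funext => t; rewrite detAhat /g !invfM !invrK; congr (_ * _); apply: mulrC.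
have cE : Num.sqrt (esup phi / einf psi) * (2 * pi)^-1
     / (4 / pi * atan ((einf (fun t => (g t)^-1) / esup (fun t => (g t)^-1)) `^ (4^-1)))
   = Num.sqrt (esup (fun t => (psi t)^-1) / einf (fun t => (phi t)^-1)) * (2 * pi)^-1
     / (4 / pi * atan ((einf g / esup g) `^ (4^-1))).
  rewrite eg1 eg2 e1 e2.
  have -> : (esup g)^-1 / (einf g)^-1 = einf g / esup g by rewrite invrK mulrC.
  by rewrite invrK [_^-1 * esup phi]mulrC.
rewrite /Qcirc gAE.
rewrite cE.
have iE : (fun t => (Num.sqrt (psi t / phi t) * nAn (Ahat A) x rho t)%:E) =
   (fun t => (Num.sqrt ((phi t)^-1 / (psi t)^-1) * nAn A x rho t)%:E).
  apply/funext => t; rewrite nAnAhat invrK; congr (EFin (Num.sqrt _ * _)).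
  exact: mulrC.
rewrite iE.
reflexivity.
Qed.

Lemma det_le (M : 'M[R]_2) (B : R) : (forall i j, `|M i j| <= B) ->
  \det M <= B * B + B * B.
Proof.
move=> hB; rewrite det2.
apply: le_trans (ler_norm _) _.
apply: le_trans (ler_normB _ _) _.
by rewrite !normrM; apply: lerD; apply: ler_pM.
Qed.

Lemma inner_eq (A : R * R -> 'M[R]_2) x rho c0 D0 : 0 < c0 ->
  (forall t, c0 <= detA_on A x rho t <= D0) ->
  inner_inf (Ahat A) x rho = inner_inf A x rho.
Proof.
move=> c00 hd.
suff E : [set Qcirc (Ahat A) x rho phi psi | phi in @Bclass R & psi in @Bclass R] =
  [set Qcirc A x rho phi psi | phi in @Bclass R & psi in @Bclass R].
  exact: (congr1 (@ereal_inf R) E).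
apply/seteqP; split => _ /= [phi Bphi [psi Bpsi <-]].
  exists (fun t => (psi t)^-1); first exact: Bclass_inv.
  exists (fun t => (phi t)^-1); first exact: Bclass_inv.
  exact: (esym (Qeq _ _ _ _ _ _ _ c00 hd Bphi Bpsi)).
exists (fun t => (psi t)^-1); first exact: Bclass_inv.
exists (fun t => (phi t)^-1); first exact: Bclass_inv.
have Q := Qeq _ _ _ _ _ _ _ c00 hd (Bclass_inv _ Bpsi) (Bclass_inv _ Bphi).
have e1 : (fun t => (phi t)^-1^-1) = phi by apply/funext => t; rewrite invrK.
have e2 : (fun t => (psi t)^-1^-1) = psi by apply/funext => t; rewrite invrK.
exact: (etrans Q (congr2 (fun a b => Qcirc A x rho a b) e1 e2)).
Qed.
End Helpers.

Theorem lemma2 (R : realType) (Omega : set (R * R)) (A : R * R -> 'M[R]_2) :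
  open Omega ->
  (exists M : R, forall p, Omega p -> `|p.1| <= M /\ `|p.2| <= M) ->
  (forall i j : 'I_2, measurable_fun Omega (fun p => A p i j)) ->
  (forall p, Omega p -> (A p)^T = A p) ->
  (exists M : R, forall p, Omega p -> forall i j, `|A p i j| <= M) ->
  (exists c : R, 0 < c /\ forall p, Omega p -> c <= \det (A p)) ->
  gamma Omega A = gamma Omega (Ahat A).
Proof.
move=> _ _ _ _ [B hB] [c [c0 hc]].
have hdet : forall p : (R * R) * R, 0 < p.2 /\ (forall t, Omega (circ p.1 p.2 t)) ->
    forall t, c <= detA_on A p.1 p.2 t <= B * B + B * B.
  move=> p [_ hp] t. rewrite /detA_on. apply/andP. split. apply: hc. exact: hp.
  by apply: det_le => i j; apply: hB.
suff E : [set inner_inf (Ahat A) p.1 p.2 | p in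
     [set p : (R * R) * R | 0 < p.2 /\ forall t, Omega (circ p.1 p.2 t)]] =
   [set inner_inf A p.1 p.2 | p in
     [set p : (R * R) * R | 0 < p.2 /\ forall t, Omega (circ p.1 p.2 t)]].
  have S : sup_circ Omega (Ahat A) = sup_circ Omega A := congr1 (@ereal_sup R) E.
  have G : forall B1 B2 : R * R -> 'M[R]_2, sup_circ Omega B1 = sup_circ Omega B2 ->
      gamma Omega B1 = gamma Omega B2.
    by move=> B1 B2 h; rewrite /gamma h.
  exact: (esym (G _ _ S)).
apply/seteqP; split => z [p hp pz]; exists p; try exact: hp.
  rewrite -pz. exact: (esym (@inner_eq R A p.1 p.2 c (B * B + B * B) c0 (hdet p hp))).
rewrite -pz. exact: (@inner_eq R A p.1 p.2 c (B * B + B * B) c0 (hdet p hp)).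
Qed.
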